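(* For the quasi-random router model for any transition matrix $P$ and any initial configuration with $M$ tokens in total, $\Psi_\sigma\le 2\lg(M+1)$.
   Context: $V=\{1,\dots,N\}$, $P$ a stochastic $N\times N$ matrix, $\mathcal N(v)=\{u:P_{v,u}>0\}$, $\delta(v)=|\mathcal N(v)|$; $\lg=\log_2$. The van der Corput function $\psi:\mathbb{Z}_{\ge0}\to[0,1)$ is $\psi(0)=0$ and, for $i>0$ written in binary as $i=\sum_{j=0}^{\lfloor\lg i\rfloor}\beta_j(i)2^j$, $\psi(i)=\sum_{j}\beta_j(i)2^{-(j+1)}$. The quasi-random router: fix an ordering $u_1,\dots,u_{\delta(v)}$ of $\mathcal N(v)$ and set $\sigma_v(i)=u_k$ where $\sum_{j=1}^{k-1}P_{v,u_j}\le\psi(i)<\sum_{j=1}^{k}P_{v,u_j}$. $I_{v,u}[z,z')=|\{j\in\{z,\dots,z'-1\}:\sigma_v(j)=u\}|$ (zero if $z'\le z$). Given $\chi^{(0)}\in\mathbb{Z}_{\ge0}^N$ with $\sum_v\chi^{(0)}_v=M$, set $Z^{(t)}_{v,u}=I_{v,u}\big[\sum_{s=0}^{t-1}\chi^{(s)}_v,\sum_{s=0}^{t}\chi^{(s)}_v\big)$, $\chi^{(t+1)}_u=\sum_vZ^{(t)}_{v,u}$; $\Psi_\sigma=\sup_{v,\,u\in\mathcal N(v),\,t\ge0}|Z^{(t)}_{v,u}-\chi^{(t)}_vP_{v,u}|$. *)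

(* Defs.v *)
(* classical reals. Vertices are 0..N-1 (paper: 1..N). *)
From Stdlib Require Import Reals Lra Lia Arith List.
Import ListNotations.
Open Scope R_scope.

Definition lg (x : R) : R := ln x / ln 2.

(* van der Corput: psi i = sum_{j=0}^{floor(lg i)} beta_j(i) 2^{-(j+1)}; psi 0 = 0 *)
Definition vdc (i : nat) : R :=
  match i with
  | O => 0
  | S _ => fold_right Rplus 0
      (map (fun j => if Nat.testbit i j then / 2 ^ (S j) else 0)
           (seq 0 (S (Nat.log2 i))))
  end.

Definition rsum (l : list nat) (f : nat -> R) : R := fold_right Rplus 0 (map f l).
Definition nsum (l : list nat) (f : nat -> nat) : nat := fold_right Nat.add 0%nat (map f l).

(* Given the ordering l = [u_1; ...; u_d] of N(v), return the first u_k with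
   x < P v u_1 + ... + P v u_k, where acc is the sum of the preceding weights.
   (With positive weights this is exactly the u_k with
   sum_{j<k} P v u_j <= x < sum_{j<=k} P v u_j, for x >= 0.)
   The default dflt is never reached when x < 1 = total weight. *)
Fixpoint pick (P : nat -> nat -> R) (v : nat) (l : list nat) (acc x : R) (dflt : nat) : nat :=
  match l with
  | [] => dflt
  | u :: l' => if Rlt_dec x (acc + P v u) then u else pick P v l' (acc + P v u) x dflt
  end.

Definition sigma (P : nat -> nat -> R) (ord : nat -> list nat) (v i : nat) : nat :=
  pick P v (ord v) 0 (vdc i) v.

Definition Icount (P : nat -> nat -> R) (ord : nat -> list nat) (v u z z' : nat) : nat :=
  length (filter (fun j => Nat.eqb (sigma P ord v j) u) (seq z (z' - z))).

(* conf t = (chi^(t), fun v => sum_{s<t} chi^(s)_v) *)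
Fixpoint conf (N : nat) (P : nat -> nat -> R) (ord : nat -> list nat)
    (chi0 : nat -> nat) (t : nat) : (nat -> nat) * (nat -> nat) :=
  match t with
  | O => (chi0, fun _ => 0%nat)
  | S t' =>
      let (c, s) := conf N P ord chi0 t' in
      (fun u => nsum (seq 0 N) (fun v => Icount P ord v u (s v) (s v + c v)),
       fun v => (s v + c v)%nat)
  end.

Definition chi N P ord chi0 t : nat -> nat := fst (conf N P ord chi0 t).

Definition Zflow N P ord chi0 (t v u : nat) : nat :=
  let s := snd (conf N P ord chi0 t) in
  let c := fst (conf N P ord chi0 t) in
  Icount P ord v u (s v) (s v + c v).

(* Main.v *)
Require Import Defs.
From Stdlib Require Import Reals Lra Lia Arith List Permutation.
Import ListNotations.
Open Scope R_scope.

Fixpoint V (L i : nat) : R :=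
  match L with
  | O => 0
  | S L' => (if Nat.odd i then / 2 else 0) + V L' (Nat.div2 i) / 2
  end.

Lemma fold_half (h : nat -> R) (l : list nat) :
  fold_right Rplus 0 (map (fun j => h j / 2) l) = fold_right Rplus 0 (map h l) / 2.
Proof. induction l as [|x l IH]; simpl; [lra|rewrite IH; lra]. Qed.

Lemma V_fold : forall L i, V L i =
  fold_right Rplus 0 (map (fun j => if Nat.testbit i j then / 2 ^ (S j) else 0) (seq 0 L)).
Proof.
  induction L as [|L IH]; intro i; [reflexivity|].
  cbn [V seq map fold_right]. rewrite <- seq_shift, map_map.
  rewrite Nat.bit0_odd, IH.
  rewrite <- fold_half. f_equal.
  - destruct (Nat.odd i); simpl; lra.
  - apply f_equal. apply map_ext. intro j.
    rewrite Nat.div2_div, Nat.div2_bits.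
    destruct (Nat.testbit i (S j)); [|lra].
    change (2 ^ S (S j)) with (2 * 2 ^ (S j)).
    rewrite Rinv_mult. assert (0 < 2 ^ S j) by (apply pow_lt; lra). field. lra.
Qed.

Lemma V_0 : forall L, V L 0 = 0.
Proof. induction L; simpl; [lra|]. rewrite IHL; lra. Qed.

Lemma V_stable : forall L i, (i < 2 ^ L)%nat -> V (S L) i = V L i.
Proof.
  induction L as [|L IH]; intros i Hi.
  - simpl in Hi. assert (i = 0%nat) by lia. subst. simpl. lra.
  - change (V (S (S L)) i) with ((if Nat.odd i then / 2 else 0) + V (S L) (Nat.div2 i) / 2).
    rewrite IH; [reflexivity|].
    pose proof (Nat.div2_odd i). destruct (Nat.odd i); simpl in *; lia.
Qed.

Lemma V_mono : forall d L i, (i < 2 ^ L)%nat -> V (L + d) i = V L i.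
Proof.
  induction d as [|d IH]; intros L i Hi.
  - rewrite Nat.add_0_r; reflexivity.
  - replace (L + S d)%nat with (S (L + d)) by lia.
    rewrite V_stable. apply IH; auto.
    apply Nat.lt_le_trans with (2 ^ L)%nat; auto. apply Nat.pow_le_mono_r; lia.
Qed.

Lemma vdc_V_log : forall i, vdc i = V (S (Nat.log2 i)) i.
Proof.
  intros [|i]. - rewrite V_0. reflexivity.
  - rewrite V_fold. reflexivity.
Qed.

Lemma vdc_V : forall L i, (i < 2 ^ L)%nat -> vdc i = V L i.
Proof.
  intros L [|i] Hi. - rewrite V_0; reflexivity.
  - rewrite vdc_V_log. destruct (Nat.log2_spec (S i)) as [H1 H2]; [lia|].
    assert (HL : (S (Nat.log2 (S i)) <= L)%nat).
    { destruct (Nat.le_gt_cases L (Nat.log2 (S i))) as [H|H]; [|lia].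
      assert (2 ^ L <= 2 ^ Nat.log2 (S i))%nat by (apply Nat.pow_le_mono_r; lia). lia. }
    replace L with (S (Nat.log2 (S i)) + (L - S (Nat.log2 (S i))))%nat by lia.
    rewrite V_mono; auto.
Qed.

Lemma V_bounds : forall L i, 0 <= V L i < 1.
Proof.
  induction L as [|L IH]; intro i; simpl; [lra|].
  destruct (IH (Nat.div2 i)). destruct (Nat.odd i); lra.
Qed.

Lemma vdc_bounds : forall i, 0 <= vdc i < 1.
Proof. intro i. rewrite vdc_V_log. apply V_bounds. Qed.

Lemma vdc_even : forall i, vdc (2 * i) = vdc i / 2.
Proof.
  intro i. assert (Hi : (i < 2 ^ i)%nat) by (apply Nat.pow_gt_lin_r; lia).
  rewrite (vdc_V (S i) (2 * i)) by (simpl; lia).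
  rewrite (vdc_V i i) by auto. change (V (S i) (2*i)) with ((if Nat.odd (2*i) then / 2 else 0) + V i (Nat.div2 (2*i)) / 2). rewrite Nat.odd_even, Nat.div2_double. lra.
Qed.

Lemma vdc_odd : forall i, vdc (2 * i + 1) = / 2 + vdc i / 2.
Proof.
  intro i. assert (Hi : (i < 2 ^ i)%nat) by (apply Nat.pow_gt_lin_r; lia).
  rewrite (vdc_V (S i) (2 * i + 1)) by (simpl; lia).
  rewrite (vdc_V i i) by auto. change (V (S i) (2*i+1)) with ((if Nat.odd (2*i+1) then / 2 else 0) + V i (Nat.div2 (2*i+1)) / 2). rewrite Nat.odd_odd.
  replace (2 * i + 1)%nat with (S (2 * i)) by lia. rewrite Nat.div2_succ_double. lra.
Qed.
Fixpoint rs (f : nat -> R) (z c : nat) : R :=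
  match c with O => 0 | S c' => f z + rs f (S z) c' end.

Lemma rs_S f z c : rs f z (S c) = f z + rs f (S z) c.
Proof. reflexivity. Qed.

Lemma rs_split : forall f c1 c2 z, rs f z (c1 + c2) = rs f z c1 + rs f (z + c1) c2.
Proof.
  intros f c1 c2. induction c1 as [|c1 IH]; intro z.
  - rewrite Nat.add_0_r. simpl. lra.
  - simpl. rewrite IH. replace (S z + c1)%nat with (z + S c1)%nat by lia. lra.
Qed.

Lemma rs_pair : forall f c z, rs f (2 * z) (2 * c) = rs (fun m => f (2 * m)%nat + f (2 * m + 1)%nat) z c.
Proof.
  intros f c. induction c as [|c IH]; intro z; [reflexivity|].
  replace (2 * S c)%nat with (S (S (2 * c))) by lia.
  rewrite !rs_S. replace (S (S (2 * z))) with (2 * S z)%nat by lia.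
  rewrite IH. replace (S (2 * z)) with (2 * z + 1)%nat by lia. lra.
Qed.

Lemma rs_ext : forall f g, (forall j, f j = g j) -> forall c z, rs f z c = rs g z c.
Proof. intros f g H c. induction c; intro z; simpl; [reflexivity|]. rewrite H, IHc. reflexivity. Qed.

Lemma rs_add : forall f g c z, rs (fun j => f j + g j) z c = rs f z c + rs g z c.
Proof. intros f g c. induction c; intro z; simpl; [lra|]. rewrite IHc. lra. Qed.

Lemma rs_sub : forall f g c z, rs (fun j => f j - g j) z c = rs f z c - rs g z c.
Proof. intros f g c. induction c; intro z; simpl; [lra|]. rewrite IHc. lra. Qed.

Lemma rs_const : forall k c z, rs (fun _ => k) z c = INR c * k.
Proof. intros k c. induction c; intro z; [simpl; lra|]. rewrite rs_S, IHc, S_INR. lra. Qed.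

Lemma rs_subc : forall f p c z, rs (fun j => f j - p) z c = rs f z c - INR c * p.
Proof. intros. rewrite rs_sub, rs_const. reflexivity. Qed.

Definition ind (x : R) (j : nat) : R := if Rlt_dec (vdc j) x then 1 else 0.

Lemma pow2S k : (2 ^ S k = 2 * 2 ^ k)%nat.
Proof. reflexivity. Qed.

Lemma lemC : forall k m x, 0 <= x <= 1 ->
  rs (ind x) (m * 2 ^ k) (2 ^ k) - 1 < x * INR (2 ^ k) - vdc m <= rs (ind x) (m * 2 ^ k) (2 ^ k).
Proof.
  induction k as [|k IH]; intros m x Hx.
  - rewrite Nat.pow_0_r, Nat.mul_1_r. simpl rs. unfold ind.
    destruct (vdc_bounds m). simpl INR. destruct (Rlt_dec (vdc m) x); lra.
  - rewrite pow2S. replace (m * (2 * 2 ^ k))%nat with (2 * (m * 2 ^ k))%nat by ring.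
    rewrite rs_pair.
    rewrite (rs_ext _ (fun i => ind (2 * x) i + ind (2 * x - 1) i)).
    2:{ intro j. unfold ind. rewrite vdc_even, vdc_odd.
        destruct (Rlt_dec (vdc j / 2) x), (Rlt_dec (vdc j) (2 * x)),
          (Rlt_dec (/ 2 + vdc j / 2) x), (Rlt_dec (vdc j) (2 * x - 1)); lra. }
    rewrite rs_add, mult_INR. set (K := INR (2 ^ k)). simpl (INR 2).
    destruct (Rle_lt_dec x (/ 2)) as [Hx2|Hx2].
    + rewrite (rs_ext (ind (2 * x - 1)) (fun _ => 0)).
      2:{ intro j. unfold ind. destruct (vdc_bounds j).
          destruct (Rlt_dec (vdc j) (2 * x - 1)); lra. }
      rewrite rs_const. specialize (IH m (2 * x) ltac:(lra)). fold K in IH |- *. replace (x * (2 * K)) with (2 * x * K) by ring. lra.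
    + rewrite (rs_ext (ind (2 * x)) (fun _ => 1)).
      2:{ intro j. unfold ind. destruct (vdc_bounds j).
          destruct (Rlt_dec (vdc j) (2 * x)); lra. }
      rewrite rs_const. specialize (IH m (2 * x - 1) ltac:(lra)). fold K in IH |- *. replace (x * (2 * K)) with ((2 * x - 1) * K + K) by ring. lra.
Qed.

Lemma window (E : nat -> nat -> R) (HE : forall k m, Rabs (E k m) <= 1)
  (HS : forall k m, E (S k) m = E k (2 * m)%nat + E k (2 * m + 1)%nat) :
  forall C c z k, (c <= C)%nat ->
    exists n, Rabs (rs (E k) z c) <= INR n /\ (2 ^ n <= (c + 1) * (c + 1))%nat.
Proof.
  assert (Hp : forall k w c, rs (E k) (2 * w) (2 * c) = rs (E (S k)) w c).
  { intros. rewrite rs_pair. apply rs_ext. intro j. rewrite HS. reflexivity. }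
  assert (H1 : forall f z, rs f z 1 = f z) by (intros; simpl; lra).
  induction C as [|C IH]; intros c z k Hc.
  - assert (c = 0%nat) by lia. subst. exists 0%nat. simpl. rewrite Rabs_R0. split; [lra|lia].
  - destruct (Nat.Even_or_Odd z) as [[w Hw]|[w Hw]];
    destruct (Nat.Even_or_Odd c) as [[d Hd]|[d Hd]]; subst.
    + destruct d as [|d].
      * exists 0%nat. simpl. rewrite Rabs_R0. split; [lra|lia].
      * rewrite Hp. destruct (IH (S d) w (S k) ltac:(lia)) as [n [Ha Hb]].
        exists n. split; auto. nia.
    + rewrite rs_split, H1, Hp. destruct (IH d w (S k) ltac:(lia)) as [n [Ha Hb]].
      exists (S n). split.
      * rewrite S_INR. eapply Rle_trans; [apply Rabs_triang|]. specialize (HE k (2 * w + 2 * d)%nat). lra.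
      * rewrite pow2S. nia.
    + destruct d as [|e].
      * exists 0%nat. simpl. rewrite Rabs_R0. split; [lra|lia].
      * replace (2 * S e)%nat with (S (2 * e + 1)) by lia. rewrite rs_S.
        replace (S (2 * w + 1)) with (2 * (w + 1))%nat by lia.
        rewrite rs_split, H1, Hp.
        destruct (IH e (w + 1)%nat (S k) ltac:(lia)) as [n [Ha Hb]].
        exists (S (S n)). split.
        -- rewrite !S_INR. eapply Rle_trans; [apply Rabs_triang|].
           eapply Rle_trans; [apply Rplus_le_compat_l; apply Rabs_triang|].
           pose proof (HE k (2 * w + 1)%nat). pose proof (HE k (2 * (w + 1) + 2 * e)%nat). lra.
        -- rewrite !pow2S. nia.
    + replace (2 * d + 1)%nat with (S (2 * d)) by lia. rewrite rs_S.
      replace (S (2 * w + 1)) with (2 * (w + 1))%nat by lia. rewrite Hp.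
      destruct (IH d (w + 1)%nat (S k) ltac:(lia)) as [n [Ha Hb]].
      exists (S n). split.
      * rewrite S_INR. eapply Rle_trans; [apply Rabs_triang|]. specialize (HE k (2 * w + 1)%nat). lra.
      * rewrite pow2S. nia.
Qed.
Lemma rsum_cons l x f : rsum (x :: l) f = f x + rsum l f.
Proof. reflexivity. Qed.

Lemma rsum_nonneg : forall l f, (forall x, In x l -> 0 <= f x) -> 0 <= rsum l f.
Proof.
  induction l as [|x l IH]; intros f H; [unfold rsum; simpl; lra|].
  rewrite rsum_cons. pose proof (H x (or_introl eq_refl)).
  pose proof (IH f (fun y Hy => H y (or_intror Hy))). lra.
Qed.

Lemma rsum_perm : forall l l' f, Permutation l l' -> rsum l f = rsum l' f.
Proof.
  intros l l' f H. induction H; unfold rsum in *; simpl in *; try lra.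
Qed.

Lemma rsum_filter : forall (p : nat -> bool) l f,
  (forall x, In x l -> p x = false -> f x = 0) -> rsum (filter p l) f = rsum l f.
Proof.
  intros p l f. induction l as [|x l IH]; intro H; [reflexivity|].
  simpl. rewrite rsum_cons. destruct (p x) eqn:E.
  - rewrite rsum_cons, IH; auto. intros; apply H; simpl; auto.
  - rewrite IH by (intros; apply H; simpl; auto). rewrite (H x) by (simpl; auto). lra.
Qed.

Section Pick.
Variable (P : nat -> nat -> R) (v : nat).

Lemma pick_in : forall l acc x d, acc <= x -> x < acc + rsum l (P v) ->
  In (pick P v l acc x d) l.
Proof.
  induction l as [|w l IH]; intros acc x d H1 H2.
  - unfold rsum in H2; simpl in H2; lra.
  - rewrite rsum_cons in H2. cbn [pick]. destruct (Rlt_dec x (acc + P v w)).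
    + left; auto.
    + right. apply IH; lra.
Qed.

Lemma pick_char : forall l acc u d, NoDup l -> In u l -> (forall w, In w l -> 0 <= P v w) ->
  exists a, acc <= a /\ a + P v u <= acc + rsum l (P v) /\
    forall x, acc <= x -> x < acc + rsum l (P v) ->
      (pick P v l acc x d = u <-> a <= x < a + P v u).
Proof.
  induction l as [|w l IH]; intros acc u d Hnd Hin Hnn; [destruct Hin|].
  inversion Hnd as [|w' l' Hw Hnd']; subst.
  assert (Hl : 0 <= rsum l (P v)) by (apply rsum_nonneg; intros; apply Hnn; simpl; auto).
  assert (Hpw : 0 <= P v w) by (apply Hnn; simpl; auto).
  rewrite rsum_cons.
  destruct (Nat.eq_dec w u) as [->|Hne].
  - exists acc. split; [lra|]. split; [lra|].
    intros x H1 H2. cbn [pick]. destruct (Rlt_dec x (acc + P v u)).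
    + split; [intros; lra|reflexivity].
    + split; [|intros; lra]. intro He.
      assert (Hi : In (pick P v l (acc + P v u) x d) l) by (apply pick_in; lra).
      rewrite He in Hi. contradiction.
  - destruct Hin as [Hin|Hin]; [contradiction|].
    destruct (IH (acc + P v w) u d Hnd' Hin) as [a [Ha1 [Ha2 Ha3]]].
    { intros; apply Hnn; simpl; auto. }
    exists a. split; [lra|]. split; [lra|].
    intros x H1 H2. cbn [pick]. destruct (Rlt_dec x (acc + P v w)).
    + split; [intro; congruence|intros; lra].
    + apply Ha3; lra.
Qed.
End Pick.

Lemma nsum_cons l x f : nsum (x :: l) f = (f x + nsum l f)%nat.
Proof. reflexivity. Qed.

Lemma nsum_ext : forall l f g, (forall x, f x = g x) -> nsum l f = nsum l g.
Proof. induction l; intros f g H; [reflexivity|]. rewrite !nsum_cons, H, (IHl f g H). reflexivity. Qed.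

Lemma nsum_add : forall l f g, nsum l (fun x => f x + g x)%nat = (nsum l f + nsum l g)%nat.
Proof. induction l; intros; [reflexivity|]. rewrite !nsum_cons, IHl. lia. Qed.

Lemma nsum_zero : forall l, nsum l (fun _ => 0%nat) = 0%nat.
Proof. induction l; [reflexivity|]. rewrite nsum_cons, IHl. reflexivity. Qed.

Lemma nsum_swap : forall l1 l2 (f : nat -> nat -> nat),
  nsum l1 (fun a => nsum l2 (f a)) = nsum l2 (fun b => nsum l1 (fun a => f a b)).
Proof.
  induction l1; intros. - simpl. rewrite nsum_zero. reflexivity.
  - rewrite nsum_cons, IHl1, <- nsum_add. apply nsum_ext. intro. reflexivity.
Qed.

Lemma nsum_le_term : forall l f x, In x l -> (f x <= nsum l f)%nat.
Proof. induction l; intros f x H; [destruct H|]. rewrite nsum_cons. destruct H; [subst; lia|].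
  specialize (IHl f x H). lia. Qed.

Lemma nsum_le_mono : forall l f g, (forall x, f x <= g x)%nat -> (nsum l f <= nsum l g)%nat.
Proof. induction l; intros f g H; [unfold nsum; simpl; lia|]. rewrite !nsum_cons. pose proof (H a). specialize (IHl f g H). lia. Qed.

Lemma nsum_ind0 : forall us x, ~ In x us -> nsum us (fun u => if Nat.eqb x u then 1 else 0)%nat = 0%nat.
Proof.
  induction us; intros x H; [reflexivity|]. rewrite nsum_cons, IHus.
  - destruct (Nat.eqb_spec x a); [subst; exfalso; apply H; simpl; auto|reflexivity].
  - intro; apply H; simpl; auto.
Qed.

Lemma nsum_ind1 : forall us x, NoDup us -> (nsum us (fun u => if Nat.eqb x u then 1 else 0) <= 1)%nat.
Proof.
  induction us; intros x H; [unfold nsum; simpl; lia|]. inversion H; subst. rewrite nsum_cons.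
  destruct (Nat.eqb_spec x a).
  - subst. rewrite nsum_ind0; auto.
  - specialize (IHus x H3). lia.
Qed.

Lemma count_le : forall (f : nat -> nat) us js, NoDup us ->
  (nsum us (fun u => length (filter (fun j => Nat.eqb (f j) u) js)) <= length js)%nat.
Proof.
  intros f us js Hnd. induction js as [|j js IH].
  - simpl. rewrite nsum_zero. lia.
  - rewrite (nsum_ext _ _ (fun u => (if Nat.eqb (f j) u then 1 else 0) + length (filter (fun j => Nat.eqb (f j) u) js))%nat).
    + rewrite nsum_add. pose proof (nsum_ind1 us (f j) Hnd). simpl length. lia.
    + intro u. simpl. destruct (Nat.eqb (f j) u); reflexivity.
Qed.

Lemma Icount_rs : forall (f : nat -> nat) u c z,
  INR (length (filter (fun j => Nat.eqb (f j) u) (seq z c))) = rs (fun j => if Nat.eqb (f j) u then 1 else 0) z c.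
Proof.
  intros f u c. induction c as [|c IH]; intro z; [reflexivity|].
  simpl seq. simpl filter. rewrite rs_S, <- IH.
  destruct (Nat.eqb (f z) u); simpl length; [rewrite S_INR|]; lra.
Qed.

Lemma chi_S N P ord chi0 t u : chi N P ord chi0 (S t) u =
  nsum (seq 0 N) (fun v => Icount P ord v u (snd (conf N P ord chi0 t) v)
     (snd (conf N P ord chi0 t) v + chi N P ord chi0 t v)).
Proof. unfold chi. cbn [conf]. destruct (conf N P ord chi0 t). reflexivity. Qed.

Lemma total_le N P ord chi0 M (HM : nsum (seq 0 N) chi0 = M) :
  forall t, (nsum (seq 0 N) (chi N P ord chi0 t) <= M)%nat.
Proof.
  induction t as [|t IH]; [unfold chi; simpl; lia|].
  rewrite (nsum_ext _ _ _ (chi_S N P ord chi0 t)).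
  rewrite nsum_swap. eapply Nat.le_trans; [|apply IH].
  apply nsum_le_mono. intro v. unfold Icount.
  set (s := snd (conf N P ord chi0 t) v). set (c := chi N P ord chi0 t v).
  replace (s + c - s)%nat with c by lia.
  eapply Nat.le_trans; [apply count_le, seq_NoDup|]. rewrite length_seq. lia.
Qed.

Theorem lemma5p6 (N : nat) (P : nat -> nat -> R) (ord : nat -> list nat)
    (chi0 : nat -> nat) (M : nat)
    (HPnn : forall v u, (v < N)%nat -> (u < N)%nat -> 0 <= P v u)
    (HProw : forall v, (v < N)%nat -> rsum (seq 0 N) (fun u => P v u) = 1)
    (Hord_nodup : forall v, (v < N)%nat -> NoDup (ord v))
    (Hord_nbr : forall v u, (v < N)%nat ->
        (In u (ord v) <-> ((u < N)%nat /\ 0 < P v u)))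
    (HM : nsum (seq 0 N) chi0 = M) :
  forall v u t, (v < N)%nat -> (u < N)%nat -> 0 < P v u ->
    Rabs (INR (Zflow N P ord chi0 t v u) - INR (chi N P ord chi0 t v) * P v u)
      <= 2 * lg (INR M + 1).
Proof.
  intros v u t Hv Hu Hp.
  assert (Hin : In u (ord v)) by (apply Hord_nbr; auto).
  assert (Hnn : forall w, In w (ord v) -> 0 <= P v w).
  { intros w Hw. apply Hord_nbr in Hw; [lra|auto]. }
  assert (Hsum : rsum (ord v) (P v) = 1).
  { rewrite <- (HProw v Hv).
    set (F := filter (fun w => if Rlt_dec 0 (P v w) then true else false) (seq 0 N)).
    rewrite (rsum_perm (ord v) F).
    - apply rsum_filter. intros x Hx Hpx. destruct (Rlt_dec 0 (P v x)); [discriminate|].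
      apply in_seq in Hx. pose proof (HPnn v x Hv ltac:(lia)). lra.
    - apply NoDup_Permutation; auto. apply NoDup_filter, seq_NoDup.
      intro x. unfold F. rewrite filter_In, in_seq, Hord_nbr by auto.
      destruct (Rlt_dec 0 (P v x)); split; intros [H1 H2]; try split; try lia; try lra; auto; try discriminate. }
  destruct (pick_char P v (ord v) 0 u v (Hord_nodup v Hv) Hin Hnn) as [a [Ha1 [Ha2 Ha3]]].
  rewrite Hsum in Ha2, Ha3.
  set (b := a + P v u) in *.
  set (g := fun j => ind b j - ind a j).
  assert (Hg : forall j, (if Nat.eqb (Defs.sigma P ord v j) u then 1 else 0) = g j).
  { intro j. unfold Defs.sigma, g, ind. destruct (vdc_bounds j).
    specialize (Ha3 (vdc j) ltac:(lra) ltac:(lra)).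
    destruct (Nat.eqb_spec (pick P v (ord v) 0 (vdc j) v) u) as [E|E];
      [apply Ha3 in E|rewrite Ha3 in E];
      destruct (Rlt_dec (vdc j) b); destruct (Rlt_dec (vdc j) a); unfold b in *;
      try (exfalso; apply E; split; lra); lra. }
  assert (HZ : INR (Zflow N P ord chi0 t v u) = rs g (snd (conf N P ord chi0 t) v) (chi N P ord chi0 t v)).
  { unfold Zflow, Icount. fold (chi N P ord chi0 t).
    set (s := snd (conf N P ord chi0 t) v). set (c := chi N P ord chi0 t v).
    replace (s + c - s)%nat with c by lia.
    rewrite Icount_rs. apply rs_ext. exact Hg. }
  rewrite HZ.
  set (s := snd (conf N P ord chi0 t) v). set (c := chi N P ord chi0 t v).
  assert (Hab : 0 <= a <= 1 /\ 0 <= b <= 1) by (unfold b in *; lra).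
  set (E := fun k m => rs g (m * 2 ^ k) (2 ^ k) - INR (2 ^ k) * (b - a)).
  assert (HE : forall k m, Rabs (E k m) <= 1).
  { intros k m. unfold E, g. rewrite rs_sub.
    pose proof (lemC k m b ltac:(lra)). pose proof (lemC k m a ltac:(lra)).
    replace (INR (2 ^ k) * (b - a)) with (b * INR (2 ^ k) - a * INR (2 ^ k)) by ring.
    apply Rabs_le. lra. }
  assert (HS : forall k m, E (S k) m = E k (2 * m)%nat + E k (2 * m + 1)%nat).
  { intros k m. unfold E. rewrite pow2S.
    replace (m * (2 * 2 ^ k))%nat with (2 * m * 2 ^ k)%nat by ring.
    replace (2 * 2 ^ k)%nat with (2 ^ k + 2 ^ k)%nat by lia.
    rewrite rs_split. replace (2 * m * 2 ^ k + 2 ^ k)%nat with ((2 * m + 1) * 2 ^ k)%nat by ring.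
    rewrite plus_INR. ring. }
  destruct (window E HE HS c c s 0 (le_n c)) as [n [Hn1 Hn2]].
  assert (HE0 : rs (E 0%nat) s c = rs g s c - INR c * P v u).
  { rewrite (rs_ext _ (fun j => g j - P v u)).
    - apply rs_subc.
    - intro j. unfold E. rewrite Nat.pow_0_r, Nat.mul_1_r. simpl. unfold b. ring. }
  rewrite <- HE0. eapply Rle_trans; [exact Hn1|].
  assert (HcM : (c <= M)%nat).
  { eapply Nat.le_trans; [|apply (total_le N P ord chi0 M HM t)].
    apply nsum_le_term. apply in_seq. lia. }
  assert (H2 : (2 ^ n <= (M + 1) * (M + 1))%nat) by nia.
  apply le_INR in H2. rewrite pow_INR, mult_INR, plus_INR in H2. replace (INR 2) with 2 in H2 by (simpl; lra).
  replace (INR 1) with 1 in H2 by (simpl; lra).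
  assert (HM0 : 0 <= INR M) by apply pos_INR.
  assert (Hl2 : 0 < ln 2) by (rewrite <- ln_1; apply ln_increasing; lra).
  assert (Hln : INR n * ln 2 <= 2 * ln (INR M + 1)).
  { rewrite <- ln_pow by lra.
    replace (2 * ln (INR M + 1)) with (ln ((INR M + 1) * (INR M + 1))) by (rewrite ln_mult; lra).
    destruct (Rle_lt_or_eq_dec _ _ H2) as [Hlt|Heq].
    - left. apply ln_increasing; [apply pow_lt; lra|exact Hlt].
    - rewrite Heq. lra. }
  unfold lg. apply Rmult_le_reg_r with (ln 2); auto.
  replace (2 * (ln (INR M + 1) / ln 2) * ln 2) with (2 * ln (INR M + 1)) by (field; lra).
  exact Hln.
Qed.
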